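(* Let $n\ge 2$ and let $\mathbf b_1,\mathbf b_2\in\mathbb R^n_+$ be linearly independent nonnegative vectors with $\operatorname{supp}\mathbf b_1\supseteq\operatorname{supp}\mathbf b_2$. Then the matrix $A=\mathbf b_1\mathbf b_1^T+\mathbf b_2\mathbf b_2^T$ has infinitely many minimal CP factorizations.
   Context: For $\mathbf x\in\mathbb R^n$, $\operatorname{supp}\mathbf x=\{i : x_i\neq 0\}$. A symmetric $n\times n$ matrix $A$ is completely positive if $A=BB^T$ for some entrywise nonnegative $n\times k$ matrix $B$; such an equality is a CP factorization of $A$. Only CP factorizations in which the columns of $B$ are pairwise linearly independent are considered, and two CP factorizations $A=BB^T=CC^T$ are considered equal if $C=BP$ for a permutation matrix $P$. The cp-rank of $A$ is the minimal number of columns of such a nonnegative $B$; a CP factorization with that many columns is called minimal. *)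

(* Defs.v *)
From HB Require Import structures.
From mathcomp Require Import all_boot all_order all_algebra all_fingroup.
From mathcomp Require Import reals.
Set Implicit Arguments. Unset Strict Implicit. Unset Printing Implicit Defensive.
Import Order.TTheory GRing.Theory Num.Theory.
Local Open Scope ring_scope.

Definition nonneg_mx (R : realType) (m k : nat) (B : 'M[R]_(m, k)) : Prop :=
  forall i j, 0 <= B i j.

Definition pairwise_indep_cols (R : realType) (m k : nat) (B : 'M[R]_(m, k)) : Prop :=
  forall j1 j2 : 'I_k, j1 != j2 -> \rank (row_mx (col j1 B) (col j2 B)) = 2%N.

Definition cp_factorization (R : realType) (m k : nat) (A : 'M[R]_m) (B : 'M[R]_(m, k)) : Prop :=
  [/\ nonneg_mx B, pairwise_indep_cols B & B *m B^T = A].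

Definition is_cp_rank (R : realType) (m : nat) (A : 'M[R]_m) (k : nat) : Prop :=
  (exists B : 'M[R]_(m, k), nonneg_mx B /\ B *m B^T = A) /\
  (forall (k' : nat) (B : 'M[R]_(m, k')), nonneg_mx B -> B *m B^T = A -> (k <= k')%N).

Definition minimal_cp_factorization (R : realType) (m k : nat) (A : 'M[R]_m) (B : 'M[R]_(m, k)) : Prop :=
  cp_factorization A B /\ is_cp_rank A k.

(* Two factorizations are identified when C = B P for a permutation matrix P. *)
Definition cp_equiv (R : realType) (m k : nat) (B C : 'M[R]_(m, k)) : Prop :=
  exists s : 'S_k, C = B *m perm_mx s.

Definition infinitely_many_min_cp (R : realType) (m : nat) (A : 'M[R]_m) : Prop :=
  exists (k : nat) (f : nat -> 'M[R]_(m, k)),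
    (forall i, minimal_cp_factorization A (f i)) /\
    (forall i j, i <> j -> ~ cp_equiv (f i) (f j)).

(* Main.v *)
Require Import Defs.
From HB Require Import structures.
From mathcomp Require Import all_boot all_order all_algebra all_fingroup.
From mathcomp Require Import reals.
From mathcomp Require Import ring lra zify.
Import Order.TTheory GRing.Theory Num.Theory.
Local Open Scope ring_scope.

Lemma mmT0 (R : realType) m n (W : 'M[R]_(m, n)) : W *m W^T = 0 -> W = 0.
Proof.
move=> h; apply/matrixP => i j; rewrite mxE.
move/matrixP: h => /(_ i i); rewrite !mxE => h2.
have h3 : \sum_k W i k ^+ 2 = 0.
  by rewrite -[RHS]h2; apply: eq_bigr => k _; rewrite mxE expr2.
have := @psumr_eq0P _ _ _ (fun k => W i k ^+ 2) (fun k _ => sqr_ge0 (W i k)) h3 j isT.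
by move/eqP; rewrite sqrf_eq0 => /eqP.
Qed.

Lemma rank_mmT (R : realType) m n (X : 'M[R]_(m, n)) : (\rank X <= \rank (X *m X^T))%N.
Proof.
have hs : (kermx (X *m X^T) <= kermx X)%MS.
  rewrite sub_kermx; apply/eqP; apply: mmT0.
  rewrite trmx_mul !mulmxA -(mulmxA _ X) mulmx_ker mul0mx //.
have := mxrankS hs; rewrite !mxrank_ker.
have := rank_leq_row X; have := rank_leq_row (X *m X^T). suff H : forall a b : nat, (b <= m)%N -> (a <= m)%N -> (m - b <= m - a)%N -> (a <= b)%N by apply: H. move=> a b; lia.
Qed.

Lemma entry_rm (R : realType) n p (c1 c2 : 'cV[R]_n) (U : 'M[R]_(p, 1 + 1)) i k :
  (U *m (row_mx c1 c2)^T) i k = U i (lshift 1 0) * c1 k 0 + U i (rshift 1 0) * c2 k 0.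
Proof.
rewrite mxE big_split_ord /= !big_ord1 tr_row_mx col_mxEu col_mxEd !mxE //.
Qed.

Lemma rank_indep (R : realType) n (c1 c2 : 'cV[R]_n) :
  (forall x y, (forall k, x * c1 k 0 + y * c2 k 0 = 0) -> x = 0 /\ y = 0) ->
  \rank (row_mx c1 c2) = 2%N.
Proof.
move=> h; rewrite -mxrank_tr.
have hk : kermx (row_mx c1 c2)^T = 0.
  apply/matrixP => i j.
  have hm := mulmx_ker (row_mx c1 c2)^T.
  have [h1 h2] := h (kermx (row_mx c1 c2)^T i (lshift 1 0)) (kermx (row_mx c1 c2)^T i (rshift 1 0))
    (fun k => etrans (esym (entry_rm _ _ _ _ _ _ _ _)) (etrans (congr1 (fun X => @fun_of_matrix _ _ _ X i k) hm) (mxE _ _ _ _))).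
  case: (split_ordP j) => j' ->; by rewrite (ord1 j') ?h1 ?h2 mxE.
have := mxrank_ker (row_mx c1 c2)^T; rewrite hk mxrank0.
have := rank_leq_row (row_mx c1 c2)^T. suff H : forall a : nat, (a <= 2)%N -> (0 = 2 - a)%N -> a = 2%N by apply: H. move=> a; lia.
Qed.

Lemma indep_rank (R : realType) n (c1 c2 : 'cV[R]_n) :
  \rank (row_mx c1 c2) = 2%N ->
  (forall x y, (forall k, x * c1 k 0 + y * c2 k 0 = 0) -> x = 0 /\ y = 0).
Proof.
move=> hr x y hxy.
have hk : kermx (row_mx c1 c2)^T = 0.
  apply/eqP; rewrite -mxrank_eq0 mxrank_ker mxrank_tr hr //.
pose U : 'M[R]_(1, 1 + 1) := row_mx (x%:M) (y%:M).
have hU : U *m (row_mx c1 c2)^T = 0.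
  by apply/matrixP => i k; rewrite entry_rm /U row_mxEl row_mxEr !mxE (ord1 i) /= !mulr1n hxy.
have : (U <= kermx (row_mx c1 c2)^T)%MS by rewrite sub_kermx hU.
rewrite hk submx0 => /eqP hU0.
have := congr1 (fun X => @fun_of_matrix _ _ _ X 0 (lshift 1 0)) hU0; have := congr1 (fun X => @fun_of_matrix _ _ _ X 0 (rshift 1 0)) hU0.
by rewrite /U row_mxEl row_mxEr !mxE /= !mulr1n.
Qed.

Lemma outer (R : realType) n (c1 c2 : 'cV[R]_n) :
  row_mx c1 c2 *m (row_mx c1 c2)^T = c1 *m c1^T + c2 *m c2^T.
Proof. by rewrite tr_row_mx mul_row_col. Qed.

Lemma colEntry (R : Type) m n (A : 'M[R]_(m, n)) j k : col j A k 0 = A k j.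
Proof. by rewrite mxE. Qed.

Lemma ord2_cases (j : 'I_(1 + 1)) : j = lshift 1 ord0 \/ j = rshift 1 ord0.
Proof. by case: (split_ordP j) => j' ->; rewrite (ord1 j'); [left|right]. Qed.

Lemma cp_rank2 (R : realType) n (b1 b2 : 'cV[R]_n) :
  (forall i, 0 <= b1 i 0) -> (forall i, 0 <= b2 i 0) ->
  \rank (row_mx b1 b2) = 2%N ->
  is_cp_rank (b1 *m b1^T + b2 *m b2^T) 2.
Proof.
move=> h1 h2 hr; split.
  exists (row_mx b1 b2); split; last exact: outer.
  move=> i j; case: (ord2_cases j) => ->.
by rewrite (row_mxEl b1 b2). by rewrite (row_mxEr b1 b2).
move=> k B _ hB.
have e1 := rank_leq_col B.
have e2 := mxrankM_maxl B B^T.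
have e3 := @rank_mmT _ _ _ (row_mx b1 b2).
move: e2 e3; rewrite hB -outer hr.
move: (\rank B) e1 => a e1 e2 e3.
exact: leq_trans e3 (leq_trans e2 e1).
Qed.

Lemma fact_ok (R : realType) n (b1 b2 : 'cV[R]_n) (t c : R) :
  (forall i, 0 <= b1 i 0) -> (forall i, 0 <= b2 i 0) ->
  \rank (row_mx b1 b2) = 2%N ->
  0 < t -> 0 < c -> c ^+ 2 + t ^+ 2 = 1 ->
  (forall i, t * b2 i 0 <= c * b1 i 0) ->
  cp_factorization (b1 *m b1^T + b2 *m b2^T)
     (row_mx (c *: b1 - t *: b2) (t *: b1 + c *: b2) : 'M_(n, 2)).
Proof.
move=> h1 h2 hr ht hc hct hi.
have EL := row_mxEl (c *: b1 - t *: b2) (t *: b1 + c *: b2).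
have ER := row_mxEr (c *: b1 - t *: b2) (t *: b1 + c *: b2).
split.
- move=> i j; case: (ord2_cases j) => ->; rewrite ?EL ?ER !mxE.
    by rewrite subr_ge0.
  by apply: addr_ge0; apply: mulr_ge0; [exact: ltW|exact: h1|exact: ltW|exact: h2].
- have key : forall x y, (forall k, x * (c * b1 k 0 - t * b2 k 0) + y * (t * b1 k 0 + c * b2 k 0) = 0) -> x = 0 /\ y = 0.
    move=> x y hxy.
    have [e1 e2] : x * c + y * t = 0 /\ y * c - x * t = 0.
      by apply: (@indep_rank R n b1 b2 hr (x * c + y * t) (y * c - x * t)) => k; rewrite -(hxy k); ring.
    split.
      by rewrite -[x]mulr1 -hct -[RHS](_ : c * (x * c + y * t) - t * (y * c - x * t) = 0);
        [ring | rewrite e1 e2; ring].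
    by rewrite -[y]mulr1 -hct -[RHS](_ : t * (x * c + y * t) + c * (y * c - x * t) = 0);
        [ring | rewrite e1 e2; ring].
  move=> j1 j2 hne; apply: rank_indep => x y hxy.
  case: (ord2_cases j1) hne hxy => ->; case: (ord2_cases j2) => -> //; rewrite ?eqxx // => _ hxy.
    apply: key => k; rewrite -(hxy k) !colEntry EL ER !mxE //.
  have hk : forall k, y * (c * b1 k 0 - t * b2 k 0) + x * (t * b1 k 0 + c * b2 k 0) = 0.
    by move=> k; rewrite -(hxy k) !colEntry EL ER !mxE [RHS]addrC.
  by have [-> ->] := key y x hk.
- rewrite outer; apply/matrixP => i j; rewrite !mxE !big_ord1 !mxE.
  have -> : (c * b1 i 0 - t * b2 i 0) * (c * b1 j 0 - t * b2 j 0) +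
    (t * b1 i 0 + c * b2 i 0) * (t * b1 j 0 + c * b2 j 0) =
    (c ^+ 2 + t ^+ 2) * (b1 i 0 * b1 j 0 + b2 i 0 * b2 j 0) by ring.
  by rewrite hct mul1r.
Qed.

Lemma distinct_fact (R : realType) n (b1 b2 : 'cV[R]_n) (t1 c1 t2 c2 : R) :
  \rank (row_mx b1 b2) = 2%N ->
  0 < t1 -> 0 < c1 -> 0 < t2 -> 0 < c2 ->
  cp_equiv (row_mx (c1 *: b1 - t1 *: b2) (t1 *: b1 + c1 *: b2) : 'M_(n, 2))
           (row_mx (c2 *: b1 - t2 *: b2) (t2 *: b1 + c2 *: b2) : 'M_(n, 2)) ->
  t1 = t2.
Proof.
move=> hr ht1 hc1 ht2 hc2 [s hs].
have EL := row_mxEl (c1 *: b1 - t1 *: b2) (t1 *: b1 + c1 *: b2).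
have ER := row_mxEr (c1 *: b1 - t1 *: b2) (t1 *: b1 + c1 *: b2).
have EL2 := row_mxEl (c2 *: b1 - t2 *: b2) (t2 *: b1 + c2 *: b2).
move: hs; rewrite -[s]invgK -col_permE => hs.
have hk : forall k, row_mx (c2 *: b1 - t2 *: b2) (t2 *: b1 + c2 *: b2) k (lshift 1 (ord0 : 'I_1))
   = row_mx (c1 *: b1 - t1 *: b2) (t1 *: b1 + c1 *: b2) k ((s^-1)%g (lshift 1 (ord0 : 'I_1))).
  by move=> k; rewrite hs mxE.
case: (ord2_cases ((s^-1)%g (lshift 1 (ord0 : 'I_1)))) hk => -> hk.
  have [_ e] : (c2 - c1) = 0 /\ (t1 - t2) = 0.
    apply: (@indep_rank R n b1 b2 hr) => k.
    have := hk k; rewrite EL EL2 !mxE => /eqP; rewrite -subr_eq0 => /eqP <-; ring.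
  by apply/eqP; rewrite -subr_eq0 e.
have [_ e] : (c2 - t1) = 0 /\ (- t2 - c1) = 0.
  apply: (@indep_rank R n b1 b2 hr) => k.
  have := hk k; rewrite ER EL2 !mxE => /eqP; rewrite -subr_eq0 => /eqP <-; ring.
exfalso; move: e => /eqP; apply/negP; rewrite lt_eqF //; lra.
Qed.

Lemma ratio_bound (R : realType) n (b1 b2 : 'cV[R]_n) :
  (forall i, 0 <= b1 i 0) -> (forall i, 0 <= b2 i 0) ->
  (forall i, b2 i 0 != 0 -> b1 i 0 != 0) ->
  forall i, b2 i 0 <= (1 + \sum_l b2 l 0 / b1 l 0) * b1 i 0.
Proof.
move=> h1 h2 hs i.
have hS : 0 <= \sum_l b2 l 0 / b1 l 0 by apply: sumr_ge0 => l _; apply: divr_ge0; [exact: h2 | exact: h1].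
have [e|ne] := eqVneq (b1 i 0) 0.
  have : b2 i 0 = 0 by case: (eqVneq (b2 i 0) 0) => // /hs; rewrite e eqxx.
  by move=> ->; rewrite e mulr0.
have hp : 0 < b1 i 0 by rewrite lt_def ne h1.
have hle : b2 i 0 / b1 i 0 <= \sum_l b2 l 0 / b1 l 0.
  rewrite (bigD1 i) //= lerDl; apply: sumr_ge0 => l _; apply: divr_ge0; [exact: h2 | exact: h1].
rewrite -[X in X <= _](divfK ne).
rewrite ler_pM2r //; lra.
Qed.

Theorem mainTheorem1 (R : realType) (n : nat) (b1 b2 : 'cV[R]_n) :
  (2 <= n)%N ->
  (forall i, 0 <= b1 i 0) -> (forall i, 0 <= b2 i 0) ->
  \rank (row_mx b1 b2) = 2%N ->
  (forall i, b2 i 0 != 0 -> b1 i 0 != 0) ->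
  infinitely_many_min_cp (b1 *m b1^T + b2 *m b2^T).
Proof.
move=> _ h1 h2 hr hs.
set S := 1 + \sum_l b2 l 0 / b1 l 0.
have hb := @ratio_bound R n b1 b2 h1 h2 hs.
have hS1 : 1 <= S.
  rewrite /S lerDl; apply: sumr_ge0 => l _; apply: divr_ge0; [exact: h2 | exact: h1].
pose tt (k : nat) : R := (2 * S * (k.+1)%:R)^-1.
pose cc (k : nat) : R := Num.sqrt (1 - tt k ^+ 2).
have htpos : forall k, 0 < tt k.
  move=> k; rewrite invr_gt0 !mulr_gt0 // ?ltr0n //; lra.
have htS : forall k, tt k * S <= 1 / 2.
  move=> k; have hk1 : 1 <= (k.+1)%:R :> R by rewrite ler1n.
  have -> : tt k * S = (2 * (k.+1)%:R)^-1.
    rewrite /tt; field; apply/andP; split; apply/eqP; lra.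
  have hu : (2 * (k.+1)%:R)^-1 * (2 * (k.+1)%:R) = 1 :> R by rewrite mulVf //; apply/eqP; lra.
  have : 0 < (2 * (k.+1)%:R)^-1 :> R by rewrite invr_gt0; lra.
  move: hu; move: ((2 * (k.+1)%:R)^-1) => u; nra.
have htle : forall k, tt k <= 1 / 2.
  move=> k; have := htS k; have := htpos k; nra.
have hc2 : forall k, cc k ^+ 2 = 1 - tt k ^+ 2.
  move=> k; rewrite sqr_sqrtr //; have := htle k; have := htpos k; nra.
have hcge : forall k, 1 / 2 <= cc k.
  move=> k; have := hc2 k; have := htle k; have := htpos k.
  have : 0 <= cc k by apply: sqrtr_ge0.
  nra.
have hcpos : forall k, 0 < cc k by move=> k; have := hcge k; lra.
exists 2%N, (fun k => row_mx (cc k *: b1 - tt k *: b2) (tt k *: b1 + cc k *: b2)).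
split.
  move=> k; split; last exact: cp_rank2.
  apply: fact_ok => //.
  - by rewrite hc2; ring.
  - move=> i; have hbi : b2 i 0 <= S * b1 i 0 := hb i.
    have e1 : tt k * b2 i 0 <= tt k * (S * b1 i 0) by rewrite ler_pM2l.
    have e2 : tt k * S * b1 i 0 <= 1 / 2 * b1 i 0 by apply: ler_wpM2r => //; exact: htS.
    have e3 : 1 / 2 * b1 i 0 <= cc k * b1 i 0 by apply: ler_wpM2r => //; exact: hcge.
    rewrite mulrA in e1; lra.
have hS0 : 2 * S != 0 by rewrite gt_eqF // mulr_gt0 // (lt_le_trans ltr01 hS1).
move=> i j hij heq.
have e := @distinct_fact R n b1 b2 _ _ _ _ hr (htpos i) (hcpos i) (htpos j) (hcpos j) heq.
have e' : 2 * S * (i.+1)%:R = 2 * S * (j.+1)%:R by apply: invr_inj; exact: e.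
have e'' : (i.+1)%:R = (j.+1)%:R :> R by apply: (mulfI hS0).
by apply: hij; apply/eqP; rewrite -eqSS -(eqr_nat R) e''.
Qed.
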